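(* There exists a connected symmetric configuration $v_3$ with strong chromatic number exactly 6 for $v=11$ and for every $v\geq 13$.
   Context: A symmetric configuration $v_3$ consists of a set of $v$ points and a collection of $v$ blocks, each block being a 3-element subset of the points, such that every point lies in exactly 3 blocks and any two distinct points lie in at most one common block; it is connected if it is not the union of two configurations on disjoint nonempty point sets. A strong colouring is an assignment of colours to points such that the three points of every block receive three distinct colours; the strong chromatic number is the minimum number of colours in a strong colouring. *)

(* Defs.v *)
From mathcomp Require Import all_boot.
Set Implicit Arguments. Unset Strict Implicit. Unset Printing Implicit Defensive.

Definition sym_config_v3 (v : nat) (B : {set {set 'I_v}}) : Prop :=
  [/\ #|B| = v,
      (forall b, b \in B -> #|b| = 3),
      (forall x : 'I_v, #|[set b in B | x \in b]| = 3) &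
      (forall x y : 'I_v, x != y -> #|[set b in B | (x \in b) && (y \in b)]| <= 1)].

Definition config_connected (v : nat) (B : {set {set 'I_v}}) : Prop :=
  ~ exists S : {set 'I_v},
      [/\ S != set0, ~: S != set0 &
          forall b, b \in B -> (b \subset S) || (b \subset ~: S)].

Definition strong_colouring (v : nat) (B : {set {set 'I_v}}) (C : Type)
  (c : 'I_v -> C) : Prop :=
  forall b, b \in B -> forall x y, x \in b -> y \in b -> c x = c y -> x = y.

Definition strongly_colourable (v : nat) (B : {set {set 'I_v}}) (k : nat) : Prop :=
  exists c : 'I_v -> 'I_k, strong_colouring B c.

Definition strong_chromatic_number_eq (v : nat) (B : {set {set 'I_v}}) (k : nat) : Prop :=
  strongly_colourable B k /\ forall j, j < k -> ~ strongly_colourable B j.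

(* Main.v *)
Require Import Defs.
From mathcomp Require Import all_boot.
From mathcomp Require Import zify.
Set Implicit Arguments. Unset Strict Implicit. Unset Printing Implicit Defensive.

Definition blk n (bl : nat -> seq nat) (j : 'I_n) : {set 'I_n} :=
  [set x : 'I_n | val x \in bl j].
Definition mkB n bl : {set {set 'I_n}} := [set blk bl j | j : 'I_n].

Definition incP n (bl : nat -> seq nat) x := exists J : seq nat,
  [/\ uniq J, size J = 3, all (fun j => j < n) J,
      (forall j, j < n -> (x \in bl j) = (j \in J)) &
      (forall j k y, j \in J -> k \in J -> j != k -> y \in bl j -> y \in bl k -> y = x)].

Lemma card_set_val n (s : seq nat) : uniq s -> all (fun x => x < n) s ->
  #|[set x : 'I_n | val x \in s]| = size s.
Proof.
elim: s => [|a s IH] /=; first by move=> _ _; apply/eqP; rewrite cards_eq0; apply/eqP/setP=> x; rewrite !inE.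
case/andP=> nas us /andP[an als].
have -> : [set x : 'I_n | val x \in a :: s] = Ordinal an |: [set x : 'I_n | val x \in s].
  by apply/setP=> x; rewrite !inE; congr (_ || _); apply/eqP/eqP => [->|->] //; apply: val_inj.
rewrite cardsU1 IH // inE /= (negPf nas) //.
Qed.

Lemma uniq_map_inj (f : nat -> nat) s x y : uniq (map f s) -> x \in s -> y \in s -> f x = f y -> x = y.
Proof.
elim: s => [|a s IH] //= /andP[nfa us]; rewrite !inE.
case/orP=> [/eqP->|xs]; case/orP=> [/eqP->|ys] // E.
- by case/negP: nfa; rewrite E; apply/mapP; exists y.
- by case/negP: nfa; rewrite -E; apply/mapP; exists x.
- exact: IH.
Qed.

Lemma size3 (s : seq nat) : size s = 3 -> exists x y z, s = [:: x; y; z].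
Proof. by case: s => [|x [|y [|z [|w s]]]] //= _; exists x, y, z. Qed.


Lemma blk_inj n bl :
  (forall j, j < n -> [&& uniq (bl j), size (bl j) == 3 & all (fun x => x < n) (bl j)]) ->
  (forall x, x < n -> incP n bl x) -> injective (@blk n bl).
Proof.
move=> HA HI j k E; apply: val_inj; apply/eqP/negPn/negP => njk.
have /and3P[u /eqP s3 al] := HA _ (ltn_ord j).
have [x [y [z bj]]] := size3 s3.
move: u al; rewrite bj /= !inE !andbT => /andP[/norP[nxy nxz] nyz] /and3P[xn yn zn].
have xk : x \in bl k.
  have : Ordinal xn \in blk bl j by rewrite inE bj inE eqxx.
  by rewrite E inE.
have yk : y \in bl k.
  have : Ordinal yn \in blk bl j by rewrite inE bj !inE eqxx orbT.
  by rewrite E inE.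
have [J [_ _ _ HJ HJ2]] := HI x xn.
have jJ : val j \in J by rewrite -(HJ _ (ltn_ord j)) bj inE eqxx.
have kJ : val k \in J by rewrite -(HJ _ (ltn_ord k)).
have := HJ2 _ _ y jJ kJ njk; rewrite bj !inE eqxx orbT => /(_ isT yk) yx.
by rewrite yx eqxx in nxy.
Qed.

Lemma sym_ok n bl :
  (forall j, j < n -> [&& uniq (bl j), size (bl j) == 3 & all (fun x => x < n) (bl j)]) ->
  (forall x, x < n -> incP n bl x) -> sym_config_v3 (mkB n bl).
Proof.
move=> HA HI; have bi := blk_inj HA HI.
have sub P : [set b in mkB n bl | P b] = blk bl @: [set j | P (blk bl j)].
  apply/setP=> b; rewrite inE; apply/andP/imsetP.
  - by case=> /imsetP[j _ ->] Pb; exists j; rewrite ?inE.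
  - by case=> j; rewrite inE => Pj ->; split=> //; apply: imset_f.
split.
- by rewrite card_imset // card_ord.
- move=> b /imsetP[j _ ->]; have /and3P[u /eqP s3 al] := HA _ (ltn_ord j).
  by rewrite card_set_val.
- move=> x; rewrite sub card_imset //.
  have [J [uJ sJ aJ HJ _]] := HI _ (ltn_ord x).
  rewrite -sJ -(card_set_val uJ aJ); apply: eq_card => j; rewrite !inE HJ //.
- move=> x y nxy; rewrite sub; apply: leq_trans (leq_imset_card _ _) _.
  apply/card_le1_eqP => j k; rewrite !inE => /andP[xj yj] /andP[xk yk].
  apply: val_inj; apply/eqP/negPn/negP => njk.
  have [J [uJ sJ aJ HJ HJ2]] := HI _ (ltn_ord x).
  have := HJ2 _ _ (val y) _ _ njk yk yj.
  rewrite -!HJ ?ltn_ord // => /(_ xk xj) /val_inj yx.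
  by rewrite yx eqxx in nxy.
Qed.

Lemma closed_all n bl (T : {set 'I_n}) (z : 'I_n) :
  (forall x, 0 < x < n -> exists2 j, j < n & (x \in bl j) && has (fun y => y < x) (bl j)) ->
  (forall j, j < n -> all (fun x => x < n) (bl j)) ->
  (forall b, b \in mkB n bl -> (b \subset T) || (b \subset ~: T)) ->
  val z = 0 -> z \in T -> forall x, x \in T.
Proof.
move=> HC HA cl z0 zT.
suff H : forall m (x : 'I_n), val x = m -> x \in T by move=> x; exact: (H _ x erefl).
elim/ltn_ind=> m IH x xm.
case: (posnP m) => [m0|mpos].
  by have -> : x = z by apply: val_inj; rewrite xm m0 z0.
have /HC [j jn /andP[xj /hasP[y yj yx]]] : 0 < val x < n by rewrite ltn_ord andbT xm.
have yn : y < n by have := HA _ jn => /allP; apply.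
have yT : Ordinal yn \in T by apply: (IH y) => //; rewrite -xm.
have bB : blk bl (Ordinal jn) \in mkB n bl by apply/imsetP; exists (Ordinal jn).
have := cl _ bB.
case/orP=> /subsetP sub.
  by apply: sub; rewrite inE.
have : Ordinal yn \in ~: T by apply: sub; rewrite inE.
by rewrite inE yT.
Qed.

Lemma conn_ok n bl :
  (forall x, 0 < x < n -> exists2 j, j < n & (x \in bl j) && has (fun y => y < x) (bl j)) ->
  (forall j, j < n -> all (fun x => x < n) (bl j)) ->
  config_connected (mkB n bl).
Proof.
move=> HC HA [S [S0 CS0 cl]].
have [x0 _] : exists x0 : 'I_n, x0 \in S by apply/set0Pn.
have n0 : 0 < n := leq_ltn_trans (leq0n _) (ltn_ord x0).
pose z := Ordinal n0.
case zS: (z \in S).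
  have all_in := closed_all HC HA cl (z:=z) erefl zS.
  by case/negP: CS0; apply/eqP/setP=> x; rewrite !inE all_in.
have cl' : forall b, b \in mkB n bl -> (b \subset ~: S) || (b \subset ~: ~: S).
  by move=> b /cl; rewrite setCK orbC.
have zC : z \in ~: S by rewrite inE zS.
have all_in := closed_all HC HA cl' (z:=z) erefl zC.
by case/negP: S0; apply/eqP/setP=> x; have := all_in x; rewrite !inE => /negPf.
Qed.

Lemma col_ok n bl col : (forall x, x < n -> col x < 6) ->
  (forall j, j < n -> uniq (map col (bl j))) -> strongly_colourable (mkB n bl) 6.
Proof.
move=> Hc Hu; exists (fun x : 'I_n => (inord (col (val x)) : 'I_6)).
move=> b /imsetP[j _ ->] x y; rewrite !inE => xj yj /(congr1 (@nat_of_ord 6)).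
rewrite !inordK ?Hc ?ltn_ord // => E; apply: val_inj; exact: (uniq_map_inj (Hu _ (ltn_ord j)) xj yj E).
Qed.

Lemma lb_transfer n bl :
  (forall j, j < n -> uniq (bl j) && all (fun x => x < n) (bl j)) ->
  (forall k, k < 6 -> forall c : nat -> nat, (forall x, x < n -> c x < k) ->
     (forall j, j < n -> uniq (map c (bl j))) -> False) ->
  forall k, k < 6 -> ~ strongly_colourable (mkB n bl) k.
Proof.
move=> HA H k kl [c Hc].
pose c' x := if @insub nat (fun x => x < n) 'I_n x is Some y then val (c y) else 0.
apply: (H k kl c').
  by move=> x xn; rewrite /c' insubT /=.
move=> j jn; have /andP[u al] := HA j jn.
rewrite map_inj_in_uniq // => x y xj yj.
have xn : x < n by move/allP: al; apply.
have yn : y < n by move/allP: al; apply.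
rewrite /c' !insubT /= => /val_inj E.
have bB : blk bl (Ordinal jn) \in mkB n bl by apply/imsetP; exists (Ordinal jn).
have := Hc _ bB (Ordinal xn) (Ordinal yn).
by rewrite !inE /= => /(_ xj yj E) /(congr1 val).
Qed.

Lemma bridge n bl col :
  (forall j, j < n -> [&& uniq (bl j), size (bl j) == 3 & all (fun x => x < n) (bl j)]) ->
  (forall x, x < n -> incP n bl x) ->
  (forall x, 0 < x < n -> exists2 j, j < n & (x \in bl j) && has (fun y => y < x) (bl j)) ->
  (forall x, x < n -> col x < 6) -> (forall j, j < n -> uniq (map col (bl j))) ->
  (forall k, k < 6 -> forall c : nat -> nat, (forall x, x < n -> c x < k) ->
     (forall j, j < n -> uniq (map c (bl j))) -> False) ->
  exists B : {set {set 'I_n}},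
    [/\ sym_config_v3 B, config_connected B & strong_chromatic_number_eq B 6].
Proof.
move=> HA HI HC Hc Hu HL; exists (mkB n bl); split.
- exact: sym_ok.
- by apply: conn_ok => // j /HA /and3P[].
- split; first exact: (col_ok Hc Hu).
  by apply: lb_transfer => // j /HA /and3P[-> _ ->].
Qed.

Definition coll n (bl : nat -> seq nat) x y :=
  has (fun j => (x \in bl j) && (y \in bl j)) (iota 0 n).

Lemma coll_uniq n bl (c : nat -> nat) (x y : nat) : coll n bl x y -> (forall j, j < n -> uniq (map c (bl j))) ->
  c x = c y -> x = y.
Proof.
case/hasP=> j; rewrite mem_iota add0n => jn /andP[xj yj] Hu E.
exact: (uniq_map_inj (Hu _ jn) xj yj E).
Qed.

Lemma lb_clique n bl (K : seq nat) :
  uniq K -> size K == 6 -> all (fun x => x < n) K ->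
  all (fun x => all (fun y => (x == y) || coll n bl x y) K) K ->
  forall k, k < 6 -> forall c : nat -> nat, (forall x, x < n -> c x < k) ->
     (forall j, j < n -> uniq (map c (bl j))) -> False.
Proof.
move=> uK /eqP sK aK cK k kl c Hck Hu.
have um : uniq (map c K).
  rewrite map_inj_in_uniq // => x y xK yK E.
  have := allP (allP cK x xK) y yK; case/orP=> [/eqP //|cxy].
  exact: coll_uniq cxy Hu E.
have := uniq_leq_size um (s2 := iota 0 k).
rewrite size_map size_iota sK => H.
suff : 6 <= k by rewrite leqNgt kl.
apply: H => z /mapP[x xK ->]; rewrite mem_iota add0n Hck //.
exact: (allP aK).
Qed.

Lemma pigeon (c : nat -> nat) k (s : seq nat) : uniq s -> all (fun x => c x < k) s ->
  2 * k < size s -> exists x y z, [/\ x \in s, y \in s & z \in s] /\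
     [/\ x != y, y != z, x != z, c x = c y & c y = c z].
Proof.
elim: k s => [|k IH] s us als ss.
  by case: s us als ss => // a s _ /andP[].
have A : all (fun x => c x < k) (filter (fun x => c x != k) s).
  by rewrite all_filter; apply/allP=> x xs; apply/implyP=> /negPf cx; have := allP als x xs; rewrite ltnS leq_eqVlt cx.
have cnt : size [seq x <- s | c x == k] + size [seq x <- s | c x != k] = size s.
  by rewrite !size_filter; exact: count_predC.
case E: (filter (fun x => c x == k) s) => [|a [|b [|d t]]];
  try (have B : 2 * k < size (filter (fun x => c x != k) s) by rewrite E /= in cnt; lia);
  try (have [x [y [z [[xs ys zs] H]]]] := IH (filter (fun x => c x != k) s) (filter_uniq _ us) A B;
   by exists x, y, z; rewrite !mem_filter in xs ys zs; case/andP: xs => _ ->; case/andP: ys => _ ->; case/andP: zs => _ ->).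
move: E => E.
have uf := filter_uniq (fun x => c x == k) us; rewrite E /= in uf.
have mf x : x \in [:: a, b, d & t] -> (x \in s) && (c x == k) by rewrite -E mem_filter andbC.
have /andP[a_s /eqP ca] := mf a (mem_head _ _).
have /andP[b_s /eqP cb] : (b \in s) && (c b == k) by apply: mf; rewrite !inE eqxx !orbT.
have /andP[d_s /eqP cd] : (d \in s) && (c d == k) by apply: mf; rewrite !inE eqxx !orbT.
exists a, b, d; split=> //; split; rewrite ?ca ?cb ?cd //; move: uf; rewrite !inE.
+ by case: (a == b).
+ by case: (b == d); rewrite ?orbT ?andbF.
+ by case: (a == d); rewrite ?orbT.
Qed.


Lemma lb_alpha n bl : 10 < n ->
  all (fun x => all (fun y => all (fun z =>
     [|| x == y, y == z, x == z, coll n bl x y, coll n bl y z | coll n bl x z])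
     (iota 0 n)) (iota 0 n)) (iota 0 n) ->
  forall k, k < 6 -> forall c : nat -> nat, (forall x, x < n -> c x < k) ->
     (forall j, j < n -> uniq (map c (bl j))) -> False.
Proof.
move=> n10 H k kl c Hck Hu.
have al : all (fun x => c x < k) (iota 0 n).
  by apply/allP=> x; rewrite mem_iota add0n => /Hck.
have sz : 2 * k < size (iota 0 n) by rewrite size_iota; lia.
have [x [y [z [[xs ys zs] [nxy nyz nxz cxy cyz]]]]] := pigeon (iota_uniq 0 n) al sz.
have := allP (allP (allP H x xs) y ys) z zs.
rewrite (negPf nxy) (negPf nyz) (negPf nxz) /=.
case/or3P=> C.
- by move: nxy; rewrite (coll_uniq C Hu cxy) eqxx.
- by move: nyz; rewrite (coll_uniq C Hu cyz) eqxx.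
- by move: nxz; rewrite (coll_uniq C Hu (etrans cxy cyz)) eqxx.
Qed.

Definition chkA n (bl : nat -> seq nat) :=
  all (fun j => [&& uniq (bl j), size (bl j) == 3 & all (fun x => x < n) (bl j)]) (iota 0 n).
Definition chkI n (bl : nat -> seq nat) :=
  all (fun x => let J := filter (fun j => x \in bl j) (iota 0 n) in
     (size J == 3) && all (fun j => all (fun k => (j == k) ||
        all (fun y => (y \in bl k) ==> (y == x)) (bl j)) J) J) (iota 0 n).
Definition chkC n (bl : nat -> seq nat) :=
  all (fun x => has (fun j => (x \in bl j) && has (fun y => y < x) (bl j)) (iota 0 n)) (iota 1 n.-1).
Definition chkCol n (bl : nat -> seq nat) (col : nat -> nat) :=
  all (fun x => col x < 6) (iota 0 n) && all (fun j => uniq (map col (bl j))) (iota 0 n).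

Lemma chkA_ok n bl : chkA n bl -> forall j, j < n ->
  [&& uniq (bl j), size (bl j) == 3 & all (fun x => x < n) (bl j)].
Proof. by move=> /allP H j jn; apply: H; rewrite mem_iota. Qed.

Lemma chkI_ok n bl : chkI n bl -> forall x, x < n -> incP n bl x.
Proof.
move=> /allP H x xn; have xi : x \in iota 0 n by rewrite mem_iota.
have /andP[/eqP s3 H2] := H x xi.
exists (filter (fun j => x \in bl j) (iota 0 n)); split=> //.
- exact: filter_uniq (iota_uniq _ _).
- by apply/allP=> j; rewrite mem_filter mem_iota => /andP[].
- by move=> j jn; rewrite mem_filter mem_iota add0n jn !andbT.
- move=> j k y jJ kJ njk yj yk.
  have := allP (allP H2 j jJ) k kJ; rewrite (negPf njk) /= => /allP /(_ y yj).
  by rewrite yk => /eqP.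
Qed.

Lemma chkC_ok n bl : chkC n bl ->
  forall x, 0 < x < n -> exists2 j, j < n & (x \in bl j) && has (fun y => y < x) (bl j).
Proof.
move=> /allP H x /andP[x0 xn].
have xi : x \in iota 1 n.-1 by rewrite mem_iota; lia.
have /hasP[j] := H x xi.
by rewrite mem_iota => /andP[_ jn] P; exists j => //; lia.
Qed.

Lemma explicit_ok n (bl : nat -> seq nat) (col : nat -> nat) :
  chkA n bl -> chkI n bl -> chkC n bl -> chkCol n bl col ->
  (forall k, k < 6 -> forall c : nat -> nat, (forall x, x < n -> c x < k) ->
     (forall j, j < n -> uniq (map c (bl j))) -> False) ->
  exists B : {set {set 'I_n}},
    [/\ sym_config_v3 B, config_connected B & strong_chromatic_number_eq B 6].
Proof.
move=> hA hI hC /andP[/allP c1 /allP c2] HL.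
apply: (bridge (col := col) (chkA_ok hA) (chkI_ok hI) (chkC_ok hC)) => //.
- by move=> x xn; apply: c1; rewrite mem_iota.
- by move=> j jn; apply: c2; rewrite mem_iota.
Qed.

Lemma mod4_lemma i : [&& i %% 4 != (i+1) %% 4, i %% 4 != (i+3) %% 4 & (i+1) %% 4 != (i+3) %% 4].
Proof. lia. Qed.

Section Glue.
Variables (g d a1 a2 a3 m : nat) (GS : seq (seq nat)) (GC : seq nat) (K : seq nat).
Local Notation n := (g + m).
Local Notation GSb := (fun j => nth [::] GS j).
Hypotheses (m8 : 8 <= m) (m4 : m %% 4 = 0).
Hypothesis Hd : [&& GSb d == [:: a1; a2; g.+2], d < g, a1 < g & a2 < g].
Hypothesis Hd2 : (a3 < g) && (a3 \notin [:: a1; a2]).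
Hypothesis HGA : all (fun j => [&& uniq (GSb j), size (GSb j) == 3 &
   all (fun y => (y < g) || ((y == g.+2) && (j == d))) (GSb j)]) (iota 0 g).
Hypothesis HGI : all (fun x => let J := filter (fun j => x \in GSb j) (iota 0 g) in
   (size J == 3 - (x == a3)) && all (fun j => all (fun k => (j == k) ||
      all (fun y => (y \in GSb k) ==> (y == x)) (GSb j)) J) J) (iota 0 g).
Hypothesis HGC : all (fun x => has (fun j => (x \in GSb j) && has (fun y => y < x) (GSb j)) (iota 0 g)) (iota 1 g.-1).
Hypothesis HGcol : [&& all (fun x => nth 0 GC x < 6) (iota 0 g),
   all (fun j => uniq (map (fun y => if y < g then nth 0 GC y else 2) (GSb j))) (iota 0 g) &
   nth 0 GC a3 \notin [:: 0; 3]].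
Hypothesis HK : [&& uniq K, size K == 6, all (fun x => x < g) K &
   all (fun x => all (fun y => (x == y) || coll g GSb x y) K) K].

Ltac lia' := try clear HGA; try clear HGI; try clear HGC; try clear HGcol; try clear HK; try clear Hd; try clear Hd2; lia.

Definition gbl j := if j < g then GSb j else if j == n.-1 then [:: n.-1; g; a3]
  else [:: j; j.+1; if j + 3 < n then j + 3 else j + 3 - m].
Definition gcol x := if x < g then nth 0 GC x else (x - g) %% 4.

Lemma GSd : GSb d = [:: a1; a2; g.+2]. Proof. by case/and4P: Hd => /eqP. Qed.
Lemma dg : d < g. Proof. by case/and4P: Hd. Qed.
Lemma a1g : a1 < g. Proof. by case/and4P: Hd. Qed.
Lemma a2g : a2 < g. Proof. by case/and4P: Hd. Qed.
Lemma a3g : a3 < g. Proof. by case/andP: Hd2. Qed.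
Lemma a3n : a3 \notin [:: a1; a2]. Proof. by case/andP: Hd2. Qed.

Lemma gA j : j < g -> [&& uniq (GSb j), size (GSb j) == 3 &
   all (fun y => (y < g) || ((y == g.+2) && (j == d))) (GSb j)].
Proof. by move=> jg; apply: (allP HGA); rewrite mem_iota. Qed.

Lemma gent j y : j < g -> y \in GSb j -> (y < g) || (y == g.+2) && (j == d).
Proof. by move=> /gA /and3P[_ _ /allP H] /H. Qed.

Lemma gbl_g j : j < g -> gbl j = GSb j.
Proof. by rewrite /gbl => ->. Qed.

Lemma gbl_sw : gbl n.-1 = [:: n.-1; g; a3].
Proof. by rewrite /gbl ltnNge (_ : g <= n.-1) ?eqxx //; lia'. Qed.

Lemma gbl_ch j y : g <= j -> j < n.-1 -> y < n -> (y \in gbl j) =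
  [|| y == j, y == j.+1, y == j + 3 | (g <= y) && (y + m == j + 3)].
Proof.
move=> gj jn yn; rewrite /gbl ltnNge gj /= (_ : (j == n.-1) = false); last by lia'.
case: ifP => h; rewrite !inE; apply/idP/idP => H; lia'.
Qed.

Lemma gbl_A j : j < n -> [&& uniq (gbl j), size (gbl j) == 3 & all (fun x => x < n) (gbl j)].
Proof.
move=> jn; case: (ltnP j g) => jg.
  rewrite gbl_g //; have /and3P[-> -> /allP H] := gA jg; apply/allP=> y /H ?; lia'.
have a3g' := a3g.
case: (eqVneq j n.-1) => [->|ne]; first by rewrite gbl_sw /= !inE; lia'.
rewrite /gbl ltnNge jg /= (negPf ne).
by case: ifP => h; rewrite /= !inE; lia'.
Qed.

Lemma gbl_lt j y : j < n -> y \in gbl j -> y < n.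
Proof. by move=> /gbl_A /and3P[_ _ /allP H] /H. Qed.

Lemma inc_g x : x < g -> incP n gbl x.
Proof.
move=> xg; have xi : x \in iota 0 g by rewrite mem_iota.
have /andP[/eqP sz /allP H2] := allP HGI x xi.
set F := filter _ _ in sz H2.
have jF j : (j \in F) = (j < g) && (x \in GSb j).
  by rewrite mem_filter mem_iota add0n andbC.
have a3g' := a3g.
have nF : n.-1 \notin F by rewrite jF negb_and -leqNgt; apply/orP; left; lia'.
exists (F ++ (if x == a3 then [:: n.-1] else [::])); split.
- rewrite cat_uniq filter_uniq ?iota_uniq //=.
  by case: (x == a3) => //=; rewrite orbF andbT.
- by rewrite size_cat sz; case: (x == a3) => /=; lia'.
- rewrite all_cat; apply/andP; split.
    by apply/allP=> j; rewrite jF => /andP[jg _]; lia'.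
  by case: (x == a3) => //=; rewrite andbT; lia'.
- move=> j jn; rewrite mem_cat jF; case: (ltnP j g) => jg /=.
    rewrite gbl_g //; case: (x == a3) => /=; last by rewrite orbF.
    by rewrite ?inE (_ : (j == n.-1) = false) ?orbF //; lia'.
  case: (eqVneq j n.-1) => [->|ne].
    rewrite gbl_sw !inE; case: (eqVneq x a3) => [->|xa]; rewrite ?inE ?eqxx ?orbT //=.
    rewrite (_ : (x == n.-1) = false); last by lia'.
    by rewrite (_ : (x == g) = false); last by lia'.
  rewrite gbl_ch; [|lia'|lia'|lia'].
  rewrite (_ : (j \in (if x == a3 then [:: n.-1] else [::])) = false); last by case: (x == a3); rewrite ?inE //; apply/negbTE.
  apply/negbTE; rewrite !negb_or; lia'.
- have side k : k \in F ++ (if x == a3 then [:: n.-1] else [::]) ->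
      (k < g) && (x \in GSb k) || (x == a3) && (k == n.-1).
    by rewrite mem_cat jF; case: (x == a3); rewrite ?inE ?orbF.
  have gd k y : (k < g) && (x \in GSb k) -> x = a3 -> y \in GSb k -> y \in [:: n.-1; g; a3] -> y = x.
    case/andP=> kg xk xa yk; case/orP: (gent kg yk) => [yg|/andP[_ /eqP kd]].
      by rewrite !inE => /or3P[] /eqP ye; [lia'|lia'|rewrite ye xa].
    move: xk; rewrite kd GSd xa !inE => /or3P[] /eqP ae.
    + by move: a3n; rewrite ae !inE eqxx.
    + by move: a3n; rewrite ae !inE eqxx orbT.
    + lia'.
  move=> j k y /side Hj /side Hk njk yj yk.
  case/orP: Hj => [Hj|/andP[/eqP xa /eqP jn]]; case/orP: Hk => [Hk|/andP[/eqP xa' /eqP kn]].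
  + case/andP: (Hj) => jg _; case/andP: (Hk) => kg _.
    have := H2 j; rewrite jF Hj => /(_ isT) /allP /(_ k); rewrite jF Hk (negPf njk) /=.
    move=> /(_ isT) /allP /(_ y); rewrite -gbl_g // => /(_ yj); rewrite -gbl_g // yk.
    by move/eqP.
  + by apply: (gd j) => //; [rewrite -gbl_g //; case/andP: Hj | rewrite -gbl_sw -kn].
  + by apply: (gd k) => //; [rewrite -gbl_g //; case/andP: Hk | rewrite -gbl_sw -jn].
  + by move: njk; rewrite jn kn eqxx.
Qed.

Lemma gmem x j : g <= x -> j < g -> (x \in gbl j) = (x == g.+2) && (j == d).
Proof.
move=> gx jg; rewrite gbl_g //; apply/idP/idP.
  by case/(gent jg)/orP => // ?; lia'.
by case/andP=> /eqP -> /eqP ->; rewrite GSd !inE eqxx !orbT.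
Qed.

Lemma gbl_chi j y : g <= j -> j < n.-1 -> y \in gbl j ->
  [|| y == j, y == j.+1, y == j + 3 | (g <= y) && (y + m == j + 3)].
Proof.
move=> gj jn yj; have yn : y < n by apply: (gbl_lt _ yj); lia'.
by rewrite -gbl_ch.
Qed.

Ltac memc H := first [ rewrite gbl_sw in H | apply gbl_chi in H; [|lia'|lia'] |
   rewrite gbl_g in H; [rewrite GSd in H | have := dg; lia'] ]; rewrite ?inE in H.

Lemma inc_c0 : incP n gbl g.
Proof.
exists [:: g; n.-1; n - 3]; split; [rewrite /= !inE; have := dg; lia' | by [] | rewrite /= !andbT; have := dg; lia' | | ].
  move=> j jn; case: (ltnP j g) => jg.
    have gx : g <= g by lia'.
    rewrite gmem //; rewrite !inE; have := dg; lia'.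
  case: (eqVneq j n.-1) => [->|ne]; [rewrite gbl_sw | rewrite gbl_ch; [|lia'|lia'|lia']];
    rewrite !inE; apply/idP/idP => HH; have := dg; have := a3g; lia'.
move=> j k y; rewrite !inE => /or3P[]/eqP-> /or3P[]/eqP-> njk yj yk;
  memc yj; memc yk; have := a3g; have := a1g; have := a2g; have := dg; lia'.
Qed.

Lemma inc_c1 : incP n gbl g.+1.
Proof.
exists [:: g.+1; g; n - 2]; split; [rewrite /= !inE; have := dg; lia' | by [] | rewrite /= !andbT; have := dg; lia' | | ].
  move=> j jn; case: (ltnP j g) => jg.
    have gx : g <= g.+1 by lia'.
    rewrite gmem //; rewrite !inE; have := dg; lia'.
  case: (eqVneq j n.-1) => [->|ne]; [rewrite gbl_sw | rewrite gbl_ch; [|lia'|lia'|lia']];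
    rewrite !inE; apply/idP/idP => HH; have := dg; have := a3g; lia'.
move=> j k y; rewrite !inE => /or3P[]/eqP-> /or3P[]/eqP-> njk yj yk;
  memc yj; memc yk; have := a3g; have := a1g; have := a2g; have := dg; lia'.
Qed.

Lemma inc_c2 : incP n gbl g.+2.
Proof.
exists [:: g.+2; g.+1; d]; split; [rewrite /= !inE; have := dg; lia' | by [] | rewrite /= !andbT; have := dg; lia' | | ].
  move=> j jn; case: (ltnP j g) => jg.
    have gx : g <= g.+2 by lia'.
    rewrite gmem //; rewrite !inE; have := dg; lia'.
  case: (eqVneq j n.-1) => [->|ne]; [rewrite gbl_sw | rewrite gbl_ch; [|lia'|lia'|lia']];
    rewrite !inE; apply/idP/idP => HH; have := dg; have := a3g; lia'.
move=> j k y; rewrite !inE => /or3P[]/eqP-> /or3P[]/eqP-> njk yj yk;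
  memc yj; memc yk; have := a3g; have := a1g; have := a2g; have := dg; lia'.
Qed.

Lemma inc_cm : incP n gbl n.-1.
Proof.
exists [:: n.-1; n - 2; n - 4]; split; [rewrite /= !inE; have := dg; lia' | by [] | rewrite /= !andbT; have := dg; lia' | | ].
  move=> j jn; case: (ltnP j g) => jg.
    have gx : g <= n.-1 by lia'.
    rewrite gmem //; rewrite !inE; have := dg; lia'.
  case: (eqVneq j n.-1) => [->|ne]; [rewrite gbl_sw | rewrite gbl_ch; [|lia'|lia'|lia']];
    rewrite !inE; apply/idP/idP => HH; have := dg; have := a3g; lia'.
move=> j k y; rewrite !inE => /or3P[]/eqP-> /or3P[]/eqP-> njk yj yk;
  memc yj; memc yk; have := a3g; have := a1g; have := a2g; have := dg; lia'.
Qed.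

Lemma inc_cg x : g + 3 <= x -> x < n.-1 -> incP n gbl x.
Proof.
move=> h1 h2.
exists [:: x; x.-1; x - 3]; split; [rewrite /= !inE; have := dg; lia' | by [] | rewrite /= !andbT; have := dg; lia' | | ].
  move=> j jn; case: (ltnP j g) => jg.
    have gx : g <= x by lia'.
    rewrite gmem //; rewrite !inE; have := dg; lia'.
  case: (eqVneq j n.-1) => [->|ne]; [rewrite gbl_sw | rewrite gbl_ch; [|lia'|lia'|lia']];
    rewrite !inE; apply/idP/idP => HH; have := dg; have := a3g; lia'.
move=> j k y; rewrite !inE => /or3P[]/eqP-> /or3P[]/eqP-> njk yj yk;
  memc yj; memc yk; have := a3g; have := a1g; have := a2g; have := dg; lia'.
Qed.

Lemma inc_all x : x < n -> incP n gbl x.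
Proof.
move=> xn; case: (ltnP x g) => xg; first exact: inc_g.
case: (eqVneq x g) => [->|h0]; first exact: inc_c0.
case: (eqVneq x g.+1) => [->|h1]; first exact: inc_c1.
case: (eqVneq x g.+2) => [->|h2]; first exact: inc_c2.
case: (eqVneq x n.-1) => [->|h3]; first exact: inc_cm.
apply: inc_cg; lia'.
Qed.

Lemma conn_all x : 0 < x < n -> exists2 j, j < n & (x \in gbl j) && has (fun y => y < x) (gbl j).
Proof.
move=> /andP[x0 xn]; case: (ltnP x g) => xg.
  have xi : x \in iota 1 g.-1 by rewrite mem_iota; lia'.
  have /hasP[j] := allP HGC x xi; rewrite mem_iota => /andP[_ jg] H.
  by exists j; [lia' | rewrite gbl_g //; lia'].
case: (eqVneq x g) => [->|h0].
  exists n.-1; first lia'.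
  rewrite gbl_sw /= !inE eqxx orbT /=; have := a3g; lia'.
exists x.-1; first lia'.
rewrite gbl_ch; [|lia'|lia'|lia'].
rewrite (_ : x == x.-1.+1); last by lia'.
rewrite orbT /=; apply/hasP; exists x.-1; last by lia'.
by rewrite gbl_ch ?eqxx //; lia'.
Qed.

Lemma col_lt x : x < n -> gcol x < 6.
Proof.
rewrite /gcol; case: ifP => xg xn; last by lia'.
case/and3P: HGcol => /allP H _ _; apply: H; rewrite mem_iota; lia'.
Qed.

Lemma col_uniq j : j < n -> uniq (map gcol (gbl j)).
Proof.
move=> jn; case: (ltnP j g) => jg.
  rewrite gbl_g //; case/and3P: HGcol => _ /allP H _.
  have ji : j \in iota 0 g by rewrite mem_iota.
  have E : map gcol (GSb j) = map (fun y => if y < g then nth 0 GC y else 2) (GSb j).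
    apply/eq_in_map=> y /(gent jg)/orP[yg|/andP[/eqP -> _]]; rewrite /gcol ?yg //.
    by case: ifP => h //; lia'.
  by rewrite E; apply: H.
case: (eqVneq j n.-1) => [->|ne].
  have e1 : (n.-1 - g) %% 4 = 3 by lia'.
  rewrite gbl_sw /= /gcol a3g ltnn subnn mod0n (_ : n.-1 < g = false); last by lia'.
  rewrite e1; case/and3P: HGcol => _ _; rewrite !inE !andbT.
  by case: (nth 0 GC a3) => [|[|[|[|c]]]].
rewrite /gbl ltnNge jg /= (negPf ne).
set w := (if j + 3 < n then j + 3 else j + 3 - m).
have gw : g <= w by rewrite /w; case: ifP => h; lia'.
have ew : (w - g) %% 4 = (j - g + 3) %% 4 by rewrite /w; case: ifP => h; lia'.
have e1 : j.+1 - g = j - g + 1 by lia'.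
rewrite /= /gcol !ltnNge jg (_ : g <= j.+1) ?gw /=; last by lia'.
rewrite ew e1; move: (j - g) => i.
by case/and3P: (mod4_lemma i) => A B C; rewrite !inE !negb_or A B C.
Qed.

Lemma lb_glue : forall k, k < 6 -> forall c : nat -> nat, (forall x, x < n -> c x < k) ->
     (forall j, j < n -> uniq (map c (gbl j))) -> False.
Proof.
case/and4P: HK => uK sK aK cK.
apply: (lb_clique (K := K)) => //.
  by apply/allP=> x /(allP aK) ?; lia'.
apply/allP=> x xK; apply/allP=> y yK; have /orP[->//|] := allP (allP cK x xK) y yK.
case/hasP=> j; rewrite mem_iota => /andP[_ jg] H; apply/orP; right.
apply/hasP; exists j; first by rewrite mem_iota; lia'.
by rewrite gbl_g //; lia'.
Qed.

Lemma glue_ok : exists B : {set {set 'I_n}},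
    [/\ sym_config_v3 B, config_connected B & strong_chromatic_number_eq B 6].
Proof.
apply: (bridge (col := gcol)).
- exact: gbl_A.
- exact: inc_all.
- exact: conn_all.
- exact: col_lt.
- exact: col_uniq.
- exact: lb_glue.
Qed.

End Glue.

Definition L11 : seq (seq nat) := [:: [:: 7; 8; 1]; [:: 0; 1; 2]; [:: 6; 4; 10]; [:: 3; 4; 0]; [:: 9; 2; 8]; [:: 5; 2; 7]; [:: 10; 9; 7]; [:: 5; 1; 4]; [:: 3; 10; 8]; [:: 6; 9; 3]; [:: 0; 5; 6]].
Definition C11 : seq nat := [:: 0; 2; 1; 4; 1; 3; 5; 4; 3; 0; 2].
Definition L13 : seq (seq nat) := [:: [:: 0; 1; 2]; [:: 0; 3; 4]; [:: 1; 3; 5]; [:: 2; 4; 5]; [:: 0; 5; 6]; [:: 1; 4; 7]; [:: 2; 3; 8]; [:: 11; 8; 9]; [:: 12; 7; 9]; [:: 10; 8; 12]; [:: 6; 9; 10]; [:: 11; 6; 12]; [:: 11; 7; 10]].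
Definition C13 : seq nat := [:: 0; 1; 2; 3; 4; 5; 1; 0; 0; 5; 3; 2; 4].
Definition K13 : seq nat := [:: 0; 1; 2; 3; 4; 5].
Definition L14 : seq (seq nat) := [:: [:: 0; 1; 2]; [:: 0; 3; 4]; [:: 1; 3; 5]; [:: 2; 4; 5]; [:: 0; 5; 6]; [:: 1; 4; 7]; [:: 2; 3; 8]; [:: 10; 8; 12]; [:: 11; 13; 8]; [:: 9; 11; 7]; [:: 9; 6; 10]; [:: 13; 9; 12]; [:: 13; 10; 7]; [:: 11; 6; 12]].
Definition C14 : seq nat := [:: 0; 1; 2; 3; 4; 5; 1; 0; 0; 4; 2; 2; 3; 1].
Definition K14 : seq nat := [:: 0; 1; 2; 3; 4; 5].
Definition L15 : seq (seq nat) := [:: [:: 0; 1; 2]; [:: 0; 3; 4]; [:: 1; 3; 5]; [:: 2; 4; 5]; [:: 0; 5; 6]; [:: 1; 4; 7]; [:: 2; 3; 8]; [:: 11; 12; 7]; [:: 13; 12; 8]; [:: 10; 9; 13]; [:: 14; 8; 10]; [:: 11; 14; 13]; [:: 9; 6; 7]; [:: 6; 10; 11]; [:: 12; 14; 9]].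
Definition C15 : seq nat := [:: 0; 1; 2; 3; 4; 5; 1; 0; 0; 2; 4; 2; 1; 5; 3].
Definition K15 : seq nat := [:: 0; 1; 2; 3; 4; 5].
Definition L16 : seq (seq nat) := [:: [:: 0; 1; 2]; [:: 0; 3; 4]; [:: 1; 3; 5]; [:: 2; 4; 5]; [:: 0; 5; 6]; [:: 1; 4; 7]; [:: 2; 3; 8]; [:: 12; 7; 13]; [:: 9; 8; 6]; [:: 10; 11; 6]; [:: 15; 14; 12]; [:: 9; 14; 7]; [:: 13; 11; 15]; [:: 10; 9; 15]; [:: 10; 13; 14]; [:: 12; 11; 8]].
Definition C16 : seq nat := [:: 0; 1; 2; 3; 4; 5; 1; 0; 0; 2; 3; 4; 3; 2; 1; 0].
Definition K16 : seq nat := [:: 0; 1; 2; 3; 4; 5].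
Definition L17 : seq (seq nat) := [:: [:: 0; 1; 2]; [:: 0; 3; 4]; [:: 1; 3; 5]; [:: 2; 4; 5]; [:: 0; 5; 6]; [:: 1; 4; 7]; [:: 2; 3; 8]; [:: 9; 11; 14]; [:: 10; 16; 11]; [:: 13; 8; 15]; [:: 12; 16; 8]; [:: 7; 13; 14]; [:: 10; 15; 7]; [:: 12; 15; 14]; [:: 9; 6; 10]; [:: 9; 16; 13]; [:: 11; 12; 6]].
Definition C17 : seq nat := [:: 0; 1; 2; 3; 4; 5; 1; 0; 0; 0; 3; 2; 3; 3; 1; 2; 1].
Definition K17 : seq nat := [:: 0; 1; 2; 3; 4; 5].
Definition L18 : seq (seq nat) := [:: [:: 0; 1; 2]; [:: 0; 3; 4]; [:: 1; 3; 5]; [:: 2; 4; 5]; [:: 0; 5; 6]; [:: 1; 4; 7]; [:: 2; 3; 8]; [:: 12; 7; 13]; [:: 11; 15; 9]; [:: 17; 11; 16]; [:: 10; 13; 17]; [:: 14; 7; 15]; [:: 8; 12; 15]; [:: 9; 6; 8]; [:: 10; 9; 16]; [:: 14; 16; 13]; [:: 12; 14; 17]; [:: 10; 11; 6]].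
Definition C18 : seq nat := [:: 0; 1; 2; 3; 4; 5; 1; 0; 0; 2; 0; 4; 4; 1; 2; 1; 5; 3].
Definition K18 : seq nat := [:: 0; 1; 2; 3; 4; 5].
Definition L19 : seq (seq nat) := [:: [:: 0; 1; 2]; [:: 0; 3; 4]; [:: 1; 3; 5]; [:: 2; 4; 5]; [:: 0; 5; 6]; [:: 1; 4; 7]; [:: 2; 3; 8]; [:: 10; 11; 15]; [:: 13; 18; 14]; [:: 16; 17; 11]; [:: 9; 6; 10]; [:: 12; 13; 7]; [:: 9; 17; 13]; [:: 8; 6; 11]; [:: 18; 15; 17]; [:: 14; 7; 15]; [:: 12; 16; 8]; [:: 14; 10; 16]; [:: 18; 9; 12]].
Definition C19 : seq nat := [:: 0; 1; 2; 3; 4; 5; 1; 0; 0; 3; 0; 3; 2; 1; 2; 1; 1; 2; 0].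
Definition K19 : seq nat := [:: 0; 1; 2; 3; 4; 5].
Definition L20 : seq (seq nat) := [:: [:: 0; 1; 2]; [:: 0; 3; 4]; [:: 1; 3; 5]; [:: 2; 4; 5]; [:: 0; 5; 6]; [:: 1; 4; 7]; [:: 2; 3; 8]; [:: 15; 8; 12]; [:: 9; 10; 6]; [:: 11; 12; 6]; [:: 18; 19; 13]; [:: 17; 19; 15]; [:: 16; 8; 11]; [:: 14; 18; 16]; [:: 9; 16; 15]; [:: 13; 9; 7]; [:: 14; 11; 7]; [:: 17; 10; 18]; [:: 19; 14; 10]; [:: 17; 13; 12]].
Definition C20 : seq nat := [:: 0; 1; 2; 3; 4; 5; 1; 0; 0; 2; 3; 2; 3; 1; 1; 1; 3; 4; 2; 0].
Definition K20 : seq nat := [:: 0; 1; 2; 3; 4; 5].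
Definition GS13 : seq (seq nat) := [:: [:: 0; 1; 2]; [:: 0; 3; 4]; [:: 1; 3; 5]; [:: 2; 4; 5]; [:: 0; 5; 6]; [:: 1; 4; 7]; [:: 2; 3; 8]; [:: 11; 8; 15]; [:: 12; 7; 9]; [:: 10; 8; 12]; [:: 6; 9; 10]; [:: 11; 6; 12]; [:: 11; 7; 10]].
Definition GC13 : seq nat := [:: 3; 2; 0; 4; 5; 1; 2; 3; 3; 1; 4; 0; 5].
Definition GK13 : seq nat := [:: 0; 1; 2; 3; 4; 5].
Definition GP13 : nat * nat * nat * nat := (7, 11, 8, 9).
Definition GS14 : seq (seq nat) := [:: [:: 0; 1; 2]; [:: 0; 3; 4]; [:: 1; 3; 5]; [:: 2; 4; 5]; [:: 0; 5; 6]; [:: 1; 4; 7]; [:: 2; 3; 8]; [:: 10; 8; 16]; [:: 11; 13; 8]; [:: 9; 11; 7]; [:: 9; 6; 10]; [:: 13; 9; 12]; [:: 13; 10; 7]; [:: 11; 6; 12]].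
Definition GC14 : seq nat := [:: 3; 2; 0; 1; 4; 5; 2; 3; 3; 4; 0; 0; 1; 2].
Definition GK14 : seq nat := [:: 0; 1; 2; 3; 4; 5].
Definition GP14 : nat * nat * nat * nat := (7, 10, 8, 12).
Definition GS15 : seq (seq nat) := [:: [:: 0; 1; 2]; [:: 0; 3; 4]; [:: 1; 3; 5]; [:: 2; 4; 5]; [:: 0; 5; 6]; [:: 1; 4; 17]; [:: 2; 3; 8]; [:: 11; 12; 7]; [:: 13; 12; 8]; [:: 10; 9; 13]; [:: 14; 8; 10]; [:: 11; 14; 13]; [:: 9; 6; 7]; [:: 6; 10; 11]; [:: 12; 14; 9]].
Definition GC15 : seq nat := [:: 1; 0; 2; 4; 3; 5; 0; 1; 1; 2; 3; 2; 0; 5; 4].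
Definition GK15 : seq nat := [:: 0; 1; 2; 3; 4; 5].
Definition GP15 : nat * nat * nat * nat := (5, 1, 4, 7).
Definition GS16 : seq (seq nat) := [:: [:: 0; 1; 2]; [:: 0; 3; 4]; [:: 1; 3; 5]; [:: 2; 4; 5]; [:: 0; 5; 6]; [:: 1; 4; 7]; [:: 2; 3; 18]; [:: 12; 7; 13]; [:: 9; 8; 6]; [:: 10; 11; 6]; [:: 15; 14; 12]; [:: 9; 14; 7]; [:: 13; 11; 15]; [:: 10; 9; 15]; [:: 10; 13; 14]; [:: 12; 11; 8]].
Definition GC16 : seq nat := [:: 1; 2; 0; 3; 4; 5; 2; 1; 1; 0; 3; 4; 3; 0; 2; 1].
Definition GK16 : seq nat := [:: 0; 1; 2; 3; 4; 5].
Definition GP16 : nat * nat * nat * nat := (6, 2, 3, 8).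

Lemma e11 : exists B : {set {set 'I_11}},
    [/\ sym_config_v3 B, config_connected B & strong_chromatic_number_eq B 6].
Proof.
apply: (explicit_ok (bl := fun j => nth [::] L11 j) (col := fun x => nth 0 C11 x)).
- by vm_compute.
- by vm_compute.
- by vm_compute.
- by vm_compute.
- by apply: lb_alpha => //; vm_compute.
Qed.

Lemma e13 : exists B : {set {set 'I_13}},
    [/\ sym_config_v3 B, config_connected B & strong_chromatic_number_eq B 6].
Proof.
apply: (explicit_ok (bl := fun j => nth [::] L13 j) (col := fun x => nth 0 C13 x)).
- by vm_compute.
- by vm_compute.
- by vm_compute.
- by vm_compute.
- by apply: (lb_clique (K := K13)); vm_compute.
Qed.

Lemma e14 : exists B : {set {set 'I_14}},
    [/\ sym_config_v3 B, config_connected B & strong_chromatic_number_eq B 6].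
Proof.
apply: (explicit_ok (bl := fun j => nth [::] L14 j) (col := fun x => nth 0 C14 x)).
- by vm_compute.
- by vm_compute.
- by vm_compute.
- by vm_compute.
- by apply: (lb_clique (K := K14)); vm_compute.
Qed.

Lemma e15 : exists B : {set {set 'I_15}},
    [/\ sym_config_v3 B, config_connected B & strong_chromatic_number_eq B 6].
Proof.
apply: (explicit_ok (bl := fun j => nth [::] L15 j) (col := fun x => nth 0 C15 x)).
- by vm_compute.
- by vm_compute.
- by vm_compute.
- by vm_compute.
- by apply: (lb_clique (K := K15)); vm_compute.
Qed.

Lemma e16 : exists B : {set {set 'I_16}},
    [/\ sym_config_v3 B, config_connected B & strong_chromatic_number_eq B 6].
Proof.
apply: (explicit_ok (bl := fun j => nth [::] L16 j) (col := fun x => nth 0 C16 x)).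
- by vm_compute.
- by vm_compute.
- by vm_compute.
- by vm_compute.
- by apply: (lb_clique (K := K16)); vm_compute.
Qed.

Lemma e17 : exists B : {set {set 'I_17}},
    [/\ sym_config_v3 B, config_connected B & strong_chromatic_number_eq B 6].
Proof.
apply: (explicit_ok (bl := fun j => nth [::] L17 j) (col := fun x => nth 0 C17 x)).
- by vm_compute.
- by vm_compute.
- by vm_compute.
- by vm_compute.
- by apply: (lb_clique (K := K17)); vm_compute.
Qed.

Lemma e18 : exists B : {set {set 'I_18}},
    [/\ sym_config_v3 B, config_connected B & strong_chromatic_number_eq B 6].
Proof.
apply: (explicit_ok (bl := fun j => nth [::] L18 j) (col := fun x => nth 0 C18 x)).
- by vm_compute.
- by vm_compute.
- by vm_compute.
- by vm_compute.
- by apply: (lb_clique (K := K18)); vm_compute.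
Qed.

Lemma e19 : exists B : {set {set 'I_19}},
    [/\ sym_config_v3 B, config_connected B & strong_chromatic_number_eq B 6].
Proof.
apply: (explicit_ok (bl := fun j => nth [::] L19 j) (col := fun x => nth 0 C19 x)).
- by vm_compute.
- by vm_compute.
- by vm_compute.
- by vm_compute.
- by apply: (lb_clique (K := K19)); vm_compute.
Qed.

Lemma e20 : exists B : {set {set 'I_20}},
    [/\ sym_config_v3 B, config_connected B & strong_chromatic_number_eq B 6].
Proof.
apply: (explicit_ok (bl := fun j => nth [::] L20 j) (col := fun x => nth 0 C20 x)).
- by vm_compute.
- by vm_compute.
- by vm_compute.
- by vm_compute.
- by apply: (lb_clique (K := K20)); vm_compute.
Qed.

Theorem mainTheorem18 (v : nat) (hv : v = 11 \/ 13 <= v) :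
  exists B : {set {set 'I_v}},
    [/\ sym_config_v3 B, config_connected B & strong_chromatic_number_eq B 6].
Proof.
case: hv => [->|hv]; first exact: e11.
case: (ltnP v 21) => hv2.
  have : [|| v == 13, v == 14, v == 15, v == 16, v == 17, v == 18, v == 19 | v == 20] by lia.
  case/or4P=> [/eqP->|/eqP->|/eqP->|]; [exact: e13|exact: e14|exact: e15|].
  case/or4P=> [/eqP->|/eqP->|/eqP->|/orP[/eqP->|/eqP->]]; [exact: e16|exact: e17|exact: e18|exact: e19|exact: e20].
have [q [r [hr ->]]] : exists q r, r < 4 /\ v = 21 + 4 * q + r.
  by exists ((v - 21) %/ 4), ((v - 21) %% 4); lia.
have : [|| r == 0, r == 1, r == 2 | r == 3] by lia.
case/or4P.
- move/eqP->; rewrite (_ : 21 + 4 * q + 0 = 13 + (8 + 4 * q)); last by lia.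
  apply: (@glue_ok 13 7 11 8 9 (8 + 4 * q) GS13 GC13 GK13); try lia; vm_compute; reflexivity.
- move/eqP->; rewrite (_ : 21 + 4 * q + 1 = 14 + (8 + 4 * q)); last by lia.
  apply: (@glue_ok 14 7 10 8 12 (8 + 4 * q) GS14 GC14 GK14); try lia; vm_compute; reflexivity.
- move/eqP->; rewrite (_ : 21 + 4 * q + 2 = 15 + (8 + 4 * q)); last by lia.
  apply: (@glue_ok 15 5 1 4 7 (8 + 4 * q) GS15 GC15 GK15); try lia; vm_compute; reflexivity.
- move/eqP->; rewrite (_ : 21 + 4 * q + 3 = 16 + (8 + 4 * q)); last by lia.
  apply: (@glue_ok 16 6 2 3 8 (8 + 4 * q) GS16 GC16 GK16); try lia; vm_compute; reflexivity.
Qed.
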